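(* Let $\mathcal C\in\{\mathbb{H},\mathbb{O}\}$, $F\in\{\mathbb{R},\mathbb{C}\}$ and $n\ge2$. Then $\triangle_{\mathcal C}\otimes1^{\otimes(n-2)}$ commutes and associates with all elements of $\mathrm{Sym}^n\mathcal C_F$. In particular, $\triangle^{(n)}_{\mathcal C}$ lies in the center of $\mathrm{Sym}^n\mathcal C_F$ (i.e. commutes and associates with all its elements), and hence $F[\triangle^{(n)}_{\mathcal C}]$ is a commutative and associative $F$-algebra.
   Context: $\mathbb{O}$ is the Cayley octonion algebra over $\mathbb{R}$ with basis $e_0=1,e_1,\dots,e_7$; $1,e_1,e_2,e_3$ span the quaternion subalgebra $\mathbb{H}$ ($e_i^2=-1$, $e_1e_2=-e_2e_1=e_3$, $e_2e_3=-e_3e_2=e_1$, $e_3e_1=-e_1e_3=e_2$), and $\mathbb{O}=\mathbb{H}\oplus\mathbb{H}e_4$ is the Cayley–Dickson double ($e_4^2=-1$, $e_{i+4}=e_ie_4$, $(x+ye_4)(z+we_4)=(xz-\bar wy)+(wx+y\bar z)e_4$). $\mathcal C_F=\mathcal C\otimes_\mathbb{R}F$; $\mathcal C_F^{\otimes n}$ is the tensor power over $F$ with componentwise multiplication; $\mathfrak S_n$ acts by $\sigma(x_1\otimes\cdots\otimes x_n)=x_{\sigma^{-1}(1)}\otimes\cdots\otimes x_{\sigma^{-1}(n)}$; $x^\vee=\frac1{n!}\sum_\sigma\sigma(x)$; $\mathrm{Sym}^n\mathcal C_F$ is the algebra of $\mathfrak S_n$-fixed tensors. With $d=\dim_\mathbb{R}\mathcal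 C$, $\triangle_{\mathcal C}=\frac1d\sum_{i=0}^{d-1}e_i\otimes e_i$ and $\triangle^{(n)}_{\mathcal C}=(\triangle_{\mathcal C}\otimes1^{\otimes(n-2)})^\vee$. An element $z$ commutes and associates with $x$ (for all $y$) if $zx=xz$ and $(zx)y=z(xy)$, $(xz)y=x(zy)$, $(xy)z=x(yz)$. *)

(* Defs.v *)
(* Tensor powers of the quaternion / octonion algebras over a
   field F, in coordinates w.r.t. the standard basis e_0 = 1, e_1, ..., e_{d-1}. *)
From mathcomp Require Import all_boot all_algebra all_fingroup.
From mathcomp Require Import reals complex.
Set Implicit Arguments.
Unset Strict Implicit.
Unset Printing Implicit Defensive.
Import GRing.Theory.
Local Open Scope ring_scope.

Inductive cd_alg := Quat | Oct.

(* d - 1, so that the index type 'I_d = 'I_(cd_dm c).+1 contains 0 *)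
Definition cd_dm (c : cd_alg) : nat := match c with Quat => 3 | Oct => 7 end.
Definition cd_dim (c : cd_alg) : nat := (cd_dm c).+1.

Section Algebras.
Variable F : fieldType.

(** Elements of C_F as coordinate functions nat -> F (coordinates >= d ignored). *)
Definition vec := nat -> F.

(* Hamilton product: e1e2 = e3, e2e3 = e1, e3e1 = e2, e_i^2 = -1 *)
Definition hmul (a b : vec) : vec := fun k =>
  match k with
  | 0 => a 0%N * b 0%N - a 1%N * b 1%N - a 2%N * b 2%N - a 3%N * b 3%N
  | 1 => a 0%N * b 1%N + a 1%N * b 0%N + a 2%N * b 3%N - a 3%N * b 2%N
  | 2 => a 0%N * b 2%N - a 1%N * b 3%N + a 2%N * b 0%N + a 3%N * b 1%N
  | 3 => a 0%N * b 3%N + a 1%N * b 2%N - a 2%N * b 1%N + a 3%N * b 0%N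
  | _ => 0
  end.

Definition hconj (a : vec) : vec := fun k => if k == 0%N then a 0%N else - a k.

Definition vadd (a b : vec) : vec := fun k => a k + b k.
Definition vsub (a b : vec) : vec := fun k => a k - b k.

(* O = H + H e4, a = x + y e4 with x = (a_0..a_3), y = (a_4..a_7), so that
   e_{i+4} = e_i e_4.  Cayley-Dickson product:
   (x + y e4)(z + w e4) = (x z - conj(w) y) + (w x + y conj(z)) e4. *)
Definition qpart (a : vec) : vec := fun k => if (k < 4)%N then a k else 0.
Definition epart (a : vec) : vec := fun k => if (k < 4)%N then a (k + 4)%N else 0.

Definition omul (a b : vec) : vec := fun k =>
  let x := qpart a in let y := epart a in
  let z := qpart b in let w := epart b in
  if (k < 4)%N then vsub (hmul x z) (hmul (hconj w) y) k
  else if (k < 8)%N then vadd (hmul w x) (hmul y (hconj z)) (k - 4)%N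
  else 0.

Definition cd_mul (c : cd_alg) : vec -> vec -> vec :=
  match c with Quat => hmul | Oct => omul end.

Definition basis_vec (i : nat) : vec := fun k => (k == i)%:R.

Definition sc (c : cd_alg) (i j k : 'I_(cd_dim c)) : F :=
  cd_mul c (basis_vec i) (basis_vec j) k.

(** C_F^{(x)n}: coordinates w.r.t. the basis e_{k_1} (x) ... (x) e_{k_n},
    indexed by k : 'I_n -> 'I_d. *)
Definition idx (c : cd_alg) (n : nat) := {ffun 'I_n -> 'I_(cd_dim c)}.
Definition tens (c : cd_alg) (n : nat) := {ffun idx c n -> F}.

Definition tscale c n (t : F) (x : tens c n) : tens c n := [ffun k => t * x k].

Definition btens c n (k : idx c n) : tens c n := [ffun k' : idx c n => (k' == k)%:R].

(** componentwise multiplication (bilinear extension of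
    (x1(x)..(x)xn)(y1(x)..(x)yn) = x1y1 (x) ... (x) xnyn) *)
Definition tmul c n (x y : tens c n) : tens c n :=
  [ffun k : idx c n => \sum_(i : idx c n) \sum_(j : idx c n)
               x i * y j * \prod_(m < n) sc (i m) (j m) (k m)].

Definition tone c n : tens c n := btens [ffun _ : 'I_n => ord0].

(** sigma (x1 (x) .. (x) xn) = x_{sigma^-1(1)} (x) .. (x) x_{sigma^-1(n)};
    on coordinates: (sigma x)_k = x_{k o sigma}. *)
Definition tperm_act c n (s : 'S_n) (x : tens c n) : tens c n :=
  [ffun k : idx c n => x [ffun m => k (s m)]].

Definition is_sym c n (x : tens c n) : Prop :=
  forall s : 'S_n, tperm_act s x = x.

Definition symmetrize c n (x : tens c n) : tens c n :=
  tscale (n`!%:R)^-1 (\sum_(s : 'S_n) tperm_act s x).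

(** triangle_C (x) 1^{(x)(n-2)} = (1/d) sum_i e_i (x) e_i (x) 1 (x) ... (x) 1 *)
Definition delta1 c n : tens c n :=
  tscale ((cd_dim c)%:R)^-1
    (\sum_(i < cd_dim c) btens [ffun m : 'I_n => if (m < 2)%N then i else ord0]).

Definition delta_n c n : tens c n := symmetrize (delta1 c n).

Definition comm_assoc_with c n (S : tens c n -> Prop) (z x : tens c n) : Prop :=
  tmul z x = tmul x z /\
  forall y, S y ->
    [/\ tmul (tmul z x) y = tmul z (tmul x y),
        tmul (tmul x z) y = tmul x (tmul z y) &
        tmul (tmul x y) z = tmul x (tmul y z)].

Inductive in_gen_alg c n (z : tens c n) : tens c n -> Prop :=
  | gen_one : in_gen_alg z (tone c n)
  | gen_z : in_gen_alg z z
  | gen_add a b : in_gen_alg z a -> in_gen_alg z b -> in_gen_alg z (a + b)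
  | gen_scale (t : F) a : in_gen_alg z a -> in_gen_alg z (tscale t a)
  | gen_mul a b : in_gen_alg z a -> in_gen_alg z b -> in_gen_alg z (tmul a b).

Definition lemma2p8_claims c n : Prop :=
  (forall x, is_sym x -> comm_assoc_with (@is_sym c n) (delta1 c n) x) /\
  (is_sym (delta_n c n) /\
   forall x, is_sym x -> comm_assoc_with (@is_sym c n) (delta_n c n) x) /\
  (forall a b e, in_gen_alg (delta_n c n) a -> in_gen_alg (delta_n c n) b ->
     in_gen_alg (delta_n c n) e ->
     tmul a b = tmul b a /\ tmul (tmul a b) e = tmul a (tmul b e)).

End Algebras.

(* Main.v *)
Require Import Defs.
From mathcomp Require Import all_boot all_algebra all_fingroup.
From mathcomp Require Import reals complex.
From mathcomp Require Import ring.
Set Implicit Arguments.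
Unset Strict Implicit.
Unset Printing Implicit Defensive.
Import GRing.Theory.
Local Open Scope ring_scope.

Definition vecZ := nat -> int.
Definition hmulZ (a b : vecZ) : vecZ := fun k =>
  match k with
  | 0 => a 0%N * b 0%N - a 1%N * b 1%N - a 2%N * b 2%N - a 3%N * b 3%N
  | 1 => a 0%N * b 1%N + a 1%N * b 0%N + a 2%N * b 3%N - a 3%N * b 2%N
  | 2 => a 0%N * b 2%N - a 1%N * b 3%N + a 2%N * b 0%N + a 3%N * b 1%N
  | 3 => a 0%N * b 3%N + a 1%N * b 2%N - a 2%N * b 1%N + a 3%N * b 0%N
  | _ => 0
  end.
Definition hconjZ (a : vecZ) : vecZ := fun k => if k == 0%N then a 0%N else - a k.
Definition qpartZ (a : vecZ) : vecZ := fun k => if (k < 4)%N then a k else 0.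
Definition epartZ (a : vecZ) : vecZ := fun k => if (k < 4)%N then a (k + 4)%N else 0.
Definition omulZ (a b : vecZ) : vecZ := fun k =>
  let x := qpartZ a in let y := epartZ a in
  let z := qpartZ b in let w := epartZ b in
  if (k < 4)%N then (hmulZ x z k - hmulZ (hconjZ w) y k)
  else if (k < 8)%N then (hmulZ w x (k - 4)%N + hmulZ y (hconjZ z) (k - 4)%N)
  else 0.
Definition bZ (i : nat) : vecZ := fun k => (k == i)%:R.
Definition cd_mulZ c := match c with Quat => hmulZ | Oct => omulZ end.
Definition scZ c (i j k : nat) : int := cd_mulZ c (bZ i) (bZ j) k.

Section Bridge.
Variable F : fieldType.
Local Notation cst := (fun z : int => (z%:~R : F)).

Lemma hmul_Z (a b : vec F) a' b' :
  (forall k, a k = cst (a' k)) -> (forall k, b k = cst (b' k)) ->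
  forall k, hmul a b k = cst (hmulZ a' b' k).
Proof.
move=> ha hb [|[|[|[|k]]]] /=; rewrite ?ha ?hb ?(intrD, intrB, intrM, intrN) //.
Qed.

Lemma hconj_Z (a : vec F) a' : (forall k, a k = cst (a' k)) ->
  forall k, hconj a k = cst (hconjZ a' k).
Proof. by move=> ha k; rewrite /hconj /hconjZ; case: eqP => _; rewrite ?intrN ha. Qed.

Lemma qpart_Z (a : vec F) a' : (forall k, a k = cst (a' k)) ->
  forall k, qpart a k = cst (qpartZ a' k).
Proof. by move=> ha k; rewrite /qpart /qpartZ; case: ifP. Qed.

Lemma epart_Z (a : vec F) a' : (forall k, a k = cst (a' k)) ->
  forall k, epart a k = cst (epartZ a' k).
Proof. by move=> ha k; rewrite /epart /epartZ; case: ifP. Qed.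

Lemma omul_Z (a b : vec F) a' b' :
  (forall k, a k = cst (a' k)) -> (forall k, b k = cst (b' k)) ->
  forall k, omul a b k = cst (omulZ a' b' k).
Proof.
move=> ha hb k; rewrite /omul /omulZ /vsub /vadd.
have hq := qpart_Z ha; have he := epart_Z ha.
have hq' := qpart_Z hb; have he' := epart_Z hb.
case: ifP => _.
  by rewrite intrB (hmul_Z hq hq') (hmul_Z (hconj_Z he') he).
case: ifP => _ //.
by rewrite intrD (hmul_Z he' hq) (hmul_Z he (hconj_Z hq')).
Qed.

Lemma basis_Z i k : basis_vec F i k = cst (bZ i k).
Proof. by rewrite /basis_vec /bZ; case: eqP. Qed.

Lemma sc_Z c (i j k : 'I_(cd_dim c)) : sc F i j k = cst (scZ c i j k).
Proof.
rewrite /sc /scZ; case: c i j k => i j k /=.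
  exact: hmul_Z (@basis_Z i) (@basis_Z j) k.
exact: omul_Z (@basis_Z i) (@basis_Z j) k.
Qed.
End Bridge.

Fixpoint sumZ (n : nat) (f : nat -> int) : int := match n with 0 => 0 | m.+1 => sumZ m f + f m end.
Fixpoint allN (n : nat) (P : nat -> bool) : bool := match n with 0 => true | m.+1 => allN m P && P m end.

Lemma sumZE n (f : nat -> int) : \sum_(i < n) f i = sumZ n f.
Proof. by elim: n => [|n IH]; rewrite ?big_ord0 // big_ord_recr /= IH. Qed.

Lemma allNP n P : allN n P -> forall i, (i < n)%N -> P i.
Proof.
elim: n => [//|n IH] /= /andP [H1 H2] i; rewrite ltnS leq_eqVlt; case/orP.
  by move/eqP ->.
exact: IH.
Qed.

Lemma intr_sumE (F : fieldType) n (f : nat -> int) :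
  ((\sum_(i < n) f i)%:~R : F) = \sum_(i < n) (f i)%:~R.
Proof. by elim: n => [|n IH]; rewrite ?big_ord0 // !big_ord_recr /= intrD IH. Qed.

Lemma intr_b (F : fieldType) (b : bool) : (((b%:R : int) *+ 2)%:~R : F) = b%:R *+ 2.
Proof. by rewrite rmorphMn; case: b. Qed.
Lemma intr_b4 (F : fieldType) (b : bool) : (((b%:R : int) *+ 4)%:~R : F) = b%:R *+ 4.
Proof. by rewrite rmorphMn; case: b. Qed.
Lemma intr_b1 (F : fieldType) (b : bool) : (((b%:R : int))%:~R : F) = b%:R.
Proof. by case: b. Qed.

Definition chk0a c := let d := cd_dim c in
  allN d (fun j => allN d (fun k => scZ c 0 j k == (j == k)%:R)).
Definition chk0b c := let d := cd_dim c in
  allN d (fun j => allN d (fun k => scZ c j 0 k == (j == k)%:R)).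
Definition sgtab c : seq (seq int) :=
  match c with
  | Quat => [:: [:: Posz 1; Posz 1; Posz 1; Posz 1];
      [:: Posz 1; Negz 0; Posz 1; Negz 0];
      [:: Posz 1; Negz 0; Negz 0; Posz 1];
      [:: Posz 1; Posz 1; Negz 0; Negz 0]]
  | Oct => [:: [:: Posz 1; Posz 1; Posz 1; Posz 1; Posz 1; Posz 1; Posz 1; Posz 1];
      [:: Posz 1; Negz 0; Posz 1; Negz 0; Posz 1; Negz 0; Negz 0; Posz 1];
      [:: Posz 1; Negz 0; Negz 0; Posz 1; Posz 1; Posz 1; Negz 0; Negz 0];
      [:: Posz 1; Posz 1; Negz 0; Negz 0; Posz 1; Negz 0; Posz 1; Negz 0];
      [:: Posz 1; Negz 0; Negz 0; Negz 0; Negz 0; Posz 1; Posz 1; Posz 1];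
      [:: Posz 1; Posz 1; Negz 0; Posz 1; Negz 0; Negz 0; Negz 0; Posz 1];
      [:: Posz 1; Posz 1; Posz 1; Negz 0; Negz 0; Posz 1; Negz 0; Negz 0];
      [:: Posz 1; Negz 0; Posz 1; Posz 1; Negz 0; Negz 0; Posz 1; Negz 0]]
  end.

Definition scT c (i j k : nat) : int :=
  if k == Nat.lxor i j then nth 0 (nth [::] (sgtab c) i) j else 0.
Definition chkT c := let d := cd_dim c in
  allN d (fun i => allN d (fun j => allN d (fun k => scZ c i j k == scT c i j k))).
Lemma chkT_ok c : chkT c. Proof. by case: c; vm_compute. Qed.

Definition chk1 c := let d := cd_dim c in
  allN d (fun p => allN d (fun q => allN d (fun k0 => allN d (fun k1 =>
   sumZ d (fun a => scT c a p k0 * scT c a q k1 + scT c a q k0 * scT c a p k1)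
     == ((p == q) && (k0 == k1))%:R *+ 2)))).
Definition chk2 c := let d := cd_dim c in
  allN d (fun p => allN d (fun q => allN d (fun k0 => allN d (fun k1 =>
   sumZ d (fun a => scT c p a k0 * scT c q a k1 + scT c q a k0 * scT c p a k1)
     == ((p == q) && (k0 == k1))%:R *+ 2)))).
Definition chk3 c := let d := cd_dim c in
  allN d (fun p0 => allN d (fun p1 => allN d (fun q0 => allN d (fun q1 =>
   sumZ d (fun b => scT c p0 q0 b * scT c p1 q1 b + scT c p0 q1 b * scT c p1 q0 b
                  + (scT c p1 q0 b * scT c p0 q1 b + scT c p1 q1 b * scT c p0 q0 b))
     == ((p0 == p1) && (q0 == q1))%:R *+ 4)))).

Lemma chk0a_ok c : chk0a c. Proof. by case: c; vm_compute. Qed.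
Lemma chk0b_ok c : chk0b c. Proof. by case: c; vm_compute. Qed.
Lemma chk1_ok c : chk1 c. Proof. by case: c; vm_compute. Qed.
Lemma chk2_ok c : chk2 c. Proof. by case: c; vm_compute. Qed.
Lemma chk3_ok c : chk3 c. Proof. by case: c; vm_compute. Qed.

Section KLemmas.
Variables (F : fieldType) (c : cd_alg).
Local Notation I := 'I_(cd_dim c).

Lemma K0a (j k : I) : sc F ord0 j k = (j == k)%:R.
Proof.
rewrite sc_Z; have := allNP (chk0a_ok c) (ltn_ord j).
by move/allNP/(_ _ (ltn_ord k))/eqP => /= ->; rewrite intr_b1.
Qed.

Lemma K0b (j k : I) : sc F j ord0 k = (j == k)%:R.
Proof.
rewrite sc_Z; have := allNP (chk0b_ok c) (ltn_ord j).
by move/allNP/(_ _ (ltn_ord k))/eqP => /= ->; rewrite intr_b1.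
Qed.

Lemma sc_T (i j k : I) : sc F i j k = (scT c i j k)%:~R.
Proof.
rewrite sc_Z; have := allNP (chkT_ok c) (ltn_ord i).
by move/allNP/(_ _ (ltn_ord j))/allNP/(_ _ (ltn_ord k))/eqP => /= ->.
Qed.

Lemma K1 (p q k0 k1 : I) :
  \sum_(a < cd_dim c) (sc F a p k0 * sc F a q k1 + sc F a q k0 * sc F a p k1)
  = ((p == q) && (k0 == k1))%:R *+ 2.
Proof.
under eq_bigr => a _ do rewrite !sc_T -!intrM -intrD.
rewrite -(intr_sumE F (cd_dim c) (fun a : nat => scT c a p k0 * scT c a q k1 + scT c a q k0 * scT c a p k1)) (sumZE (cd_dim c) (fun a : nat => scT c a p k0 * scT c a q k1 + scT c a q k0 * scT c a p k1)).
have := allNP (chk1_ok c) (ltn_ord p).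
move/allNP/(_ _ (ltn_ord q))/allNP/(_ _ (ltn_ord k0))/allNP/(_ _ (ltn_ord k1))/eqP => /= ->.
by rewrite -!(inj_eq val_inj) /= intr_b.
Qed.

Lemma K2 (p q k0 k1 : I) :
  \sum_(a < cd_dim c) (sc F p a k0 * sc F q a k1 + sc F q a k0 * sc F p a k1)
  = ((p == q) && (k0 == k1))%:R *+ 2.
Proof.
under eq_bigr => a _ do rewrite !sc_T -!intrM -intrD.
rewrite -(intr_sumE F (cd_dim c) (fun a : nat => scT c p a k0 * scT c q a k1 + scT c q a k0 * scT c p a k1)) (sumZE (cd_dim c) (fun a : nat => scT c p a k0 * scT c q a k1 + scT c q a k0 * scT c p a k1)).
have := allNP (chk2_ok c) (ltn_ord p).
move/allNP/(_ _ (ltn_ord q))/allNP/(_ _ (ltn_ord k0))/allNP/(_ _ (ltn_ord k1))/eqP => /= ->.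
by rewrite -!(inj_eq val_inj) /= intr_b.
Qed.

Lemma K3 (p0 p1 q0 q1 : I) :
  \sum_(b < cd_dim c) (sc F p0 q0 b * sc F p1 q1 b + sc F p0 q1 b * sc F p1 q0 b
                  + (sc F p1 q0 b * sc F p0 q1 b + sc F p1 q1 b * sc F p0 q0 b))
  = ((p0 == p1) && (q0 == q1))%:R *+ 4.
Proof.
under eq_bigr => a _ do rewrite !sc_T -!intrM -!intrD.
rewrite -(intr_sumE F (cd_dim c) (fun b : nat => scT c p0 q0 b * scT c p1 q1 b + scT c p0 q1 b * scT c p1 q0 b + (scT c p1 q0 b * scT c p0 q1 b + scT c p1 q1 b * scT c p0 q0 b))) (sumZE (cd_dim c) (fun b : nat => scT c p0 q0 b * scT c p1 q1 b + scT c p0 q1 b * scT c p1 q0 b + (scT c p1 q0 b * scT c p0 q1 b + scT c p1 q1 b * scT c p0 q0 b))).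
have := allNP (chk3_ok c) (ltn_ord p0).
move/allNP/(_ _ (ltn_ord p1))/allNP/(_ _ (ltn_ord q0))/allNP/(_ _ (ltn_ord q1))/eqP => /= ->.
by rewrite -!(inj_eq val_inj) /= intr_b4.
Qed.
End KLemmas.


Section Tens.
Variables (F : fieldType) (c : cd_alg).
Local Notation I := 'I_(cd_dim c).
Local Notation tens := (tens F c).

Definition ev (a : I) : I -> F := fun b => (b == a)%:R.
Definition pt n (u : 'I_n -> I -> F) : tens n := [ffun k : idx c n => \prod_m u m (k m)].
Definition mulV (u v : I -> F) : I -> F :=
  fun k => \sum_a \sum_b u a * v b * sc F a b k.

Lemma eq_pt n (u v : 'I_n -> I -> F) : (forall m, u m =1 v m) -> pt u = pt v.
Proof. by move=> h; apply/ffunP => k; rewrite !ffunE; apply: eq_bigr => m _; exact: h. Qed.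

Lemma tmul_pt n (u v : 'I_n -> I -> F) :
  tmul (pt u) (pt v) = pt (fun m => mulV (u m) (v m)).
Proof.
apply/ffunP => k; rewrite !ffunE /mulV.
transitivity (\sum_(i : idx c n) \sum_(j : idx c n)
   \prod_m (u m (i m) * v m (j m) * sc F (i m) (j m) (k m))).
  by apply: eq_bigr => i _; apply: eq_bigr => j _; rewrite !ffunE -!big_split.
rewrite bigA_distr_bigA; apply: eq_bigr => i _.
by rewrite bigA_distr_bigA.
Qed.

Lemma sum_ev_l (a0 : I) (f : I -> F) : \sum_a ev a0 a * f a = f a0.
Proof.
rewrite (bigD1 a0) //= big1 => [|a Ha]; first by rewrite /ev eqxx mul1r addr0.
by rewrite /ev (negbTE Ha) mul0r.
Qed.

Lemma sum_ev_r (a0 : I) (f : I -> F) : \sum_a f a * ev a0 a = f a0.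
Proof. by rewrite -(sum_ev_l a0 f); apply: eq_bigr => a _; rewrite mulrC. Qed.

Lemma mulVE (u v : I -> F) k :
  mulV u v k = \sum_a u a * \sum_b v b * sc F a b k.
Proof.
rewrite /mulV; apply: eq_bigr => a _; rewrite mulr_sumr; apply: eq_bigr => b _.
by rewrite mulrA.
Qed.

Lemma mulV_ev (a b : I) : mulV (ev a) (ev b) =1 sc F a b.
Proof. by move=> k; rewrite mulVE sum_ev_l sum_ev_l. Qed.

Lemma mulV1l (v : I -> F) : mulV (ev ord0) v =1 v.
Proof.
move=> k; rewrite mulVE sum_ev_l.
by under eq_bigr => b _ do rewrite K0a; rewrite sum_ev_r.
Qed.

Lemma mulV1r (v : I -> F) : mulV v (ev ord0) =1 v.
Proof.
move=> k; rewrite mulVE.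
under eq_bigr => a _ do rewrite sum_ev_l K0b.
by rewrite sum_ev_r.
Qed.

Lemma prod_eq_nat n (f g : idx c n) :
  \prod_(m < n) ((f m == g m)%:R : F) = (f == g)%:R.
Proof.
case: eqP => [->|ne]; first by rewrite big1 // => m _; rewrite eqxx.
case: (pickP (fun m => f m != g m)) => [m Hm|H].
  by rewrite (bigD1 m) //= (negbTE Hm) mul0r.
by case: ne; apply/ffunP => m; move: (H m) => /= /negbFE /eqP.
Qed.

Lemma btens_pt n (k : idx c n) : btens F k = pt (fun m => ev (k m)).
Proof. by apply/ffunP => k'; rewrite !ffunE prod_eq_nat. Qed.

Lemma tmulDl n (x y z : tens n) : tmul (x + y) z = tmul x z + tmul y z.
Proof.
apply/ffunP => k; rewrite !ffunE -big_split; apply: eq_bigr => i _.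
rewrite -big_split; apply: eq_bigr => j _; by rewrite !ffunE !mulrDl.
Qed.

Lemma tmulDr n (x y z : tens n) : tmul x (y + z) = tmul x y + tmul x z.
Proof.
apply/ffunP => k; rewrite !ffunE -big_split; apply: eq_bigr => i _.
rewrite -big_split; apply: eq_bigr => j _; by rewrite !ffunE mulrDr !mulrDl.
Qed.

Lemma tmul0l n (x : tens n) : tmul 0 x = 0.
Proof.
apply/ffunP => k; rewrite !ffunE big1 // => i _; rewrite big1 // => j _.
by rewrite ffunE !mul0r.
Qed.

Lemma tmul0r n (x : tens n) : tmul x 0 = 0.
Proof.
apply/ffunP => k; rewrite !ffunE big1 // => i _; rewrite big1 // => j _.
by rewrite ffunE mulr0 mul0r.
Qed.

Lemma tmulZl n t (x y : tens n) : tmul (tscale t x) y = tscale t (tmul x y).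
Proof.
apply/ffunP => k; rewrite !ffunE mulr_sumr; apply: eq_bigr => i _.
rewrite mulr_sumr; apply: eq_bigr => j _; by rewrite !ffunE !mulrA.
Qed.

Lemma tmulZr n t (x y : tens n) : tmul x (tscale t y) = tscale t (tmul x y).
Proof.
apply/ffunP => k; rewrite !ffunE mulr_sumr; apply: eq_bigr => i _.
rewrite mulr_sumr; apply: eq_bigr => j _; rewrite !ffunE; ring.
Qed.

Lemma tmul_suml n (J : Type) (r : seq J) (P : pred J) (f : J -> tens n) y :
  tmul (\sum_(j <- r | P j) f j) y = \sum_(j <- r | P j) tmul (f j) y.
Proof. exact: (big_morph (fun x => tmul x y) (fun a b => tmulDl a b y) (tmul0l y)). Qed.

Lemma tmul_sumr n (J : Type) (r : seq J) (P : pred J) (f : J -> tens n) y :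
  tmul y (\sum_(j <- r | P j) f j) = \sum_(j <- r | P j) tmul y (f j).
Proof. exact: (big_morph (fun x => tmul y x) (fun a b => tmulDr y a b) (tmul0r y)). Qed.

Lemma tscaleD n t (x y : tens n) : tscale t (x + y) = tscale t x + tscale t y.
Proof. by apply/ffunP => k; rewrite !ffunE mulrDr. Qed.
Lemma tscale0 n t : tscale t (0 : tens n) = 0.
Proof. by apply/ffunP => k; rewrite !ffunE mulr0. Qed.
Lemma tscale_sum n t (J : Type) (r : seq J) (P : pred J) (f : J -> tens n) :
  tscale t (\sum_(j <- r | P j) f j) = \sum_(j <- r | P j) tscale t (f j).
Proof. exact: (big_morph (tscale t) (@tscaleD n t) (tscale0 n t)). Qed.
Lemma tscaleA n s t (x : tens n) : tscale s (tscale t x) = tscale (s * t) x.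
Proof. by apply/ffunP => k; rewrite !ffunE mulrA. Qed.
Lemma tscale_suml n (J : Type) (r : seq J) (P : pred J) (f : J -> F) (x : tens n) :
  \sum_(j <- r | P j) tscale (f j) x = tscale (\sum_(j <- r | P j) f j) x.
Proof. by apply/ffunP => k; rewrite sum_ffunE !ffunE mulr_suml; apply: eq_bigr => j _; rewrite ffunE. Qed.
Lemma tscale1 n (x : tens n) : tscale 1 x = x.
Proof. by apply/ffunP => k; rewrite !ffunE mul1r. Qed.
Lemma tscaleDl n s t (x : tens n) : tscale (s + t) x = tscale s x + tscale t x.
Proof. by apply/ffunP => k; rewrite !ffunE mulrDl. Qed.

Lemma expand n (x : tens n) : x = \sum_i tscale (x i) (btens F i).
Proof.
apply/ffunP => k; rewrite sum_ffunE (bigD1 k) //= big1 => [|i Hi].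
  by rewrite !ffunE eqxx mulr1 addr0.
by rewrite !ffunE eq_sym (negbTE Hi) mulr0.
Qed.


Definition hs n (s : 'S_n) (i : idx c n) : idx c n := [ffun m => i (s m)].

Lemma hs_inj n (s : 'S_n) : injective (hs s).
Proof.
move=> i i' H; apply/ffunP => m.
by have := congr1 (fun f : idx c n => f ((s^-1)%g m)) H; rewrite !ffunE permKV.
Qed.

Lemma tpa_tmul n (s : 'S_n) (x y : tens n) :
  tperm_act s (tmul x y) = tmul (tperm_act s x) (tperm_act s y).
Proof.
apply/ffunP => k; rewrite !ffunE (reindex_inj (@hs_inj n s)).
apply: eq_bigr => i _; rewrite (reindex_inj (@hs_inj n s)); apply: eq_bigr => j _.
rewrite !ffunE; congr (_ * _).
rewrite [RHS](reindex_inj (@perm_inj _ s)); apply: eq_bigr => m _.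
by rewrite !ffunE.
Qed.

Lemma tpa_comp n (s t : 'S_n) (x : tens n) :
  tperm_act s (tperm_act t x) = tperm_act (t * s)%g x.
Proof. by apply/ffunP => k; rewrite !ffunE; congr (x _); apply/ffunP => m; rewrite !ffunE permM. Qed.

Lemma tpaD n (s : 'S_n) (x y : tens n) : tperm_act s (x + y) = tperm_act s x + tperm_act s y.
Proof. by apply/ffunP => k; rewrite !ffunE. Qed.
Lemma tpa0 n (s : 'S_n) : tperm_act s (0 : tens n) = 0.
Proof. by apply/ffunP => k; rewrite !ffunE. Qed.
Lemma tpaZ n (s : 'S_n) t (x : tens n) : tperm_act s (tscale t x) = tscale t (tperm_act s x).
Proof. by apply/ffunP => k; rewrite !ffunE. Qed.
Lemma tpa_sum n (s : 'S_n) (J : Type) (r : seq J) (P : pred J) (f : J -> tens n) :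
  tperm_act s (\sum_(j <- r | P j) f j) = \sum_(j <- r | P j) tperm_act s (f j).
Proof. exact: (big_morph (tperm_act s) (@tpaD n s) (tpa0 s)). Qed.

Lemma tone_pt n : tone F c n = pt (fun _ => ev ord0).
Proof. by rewrite /tone btens_pt; apply: eq_pt => m b; rewrite ffunE. Qed.

Lemma tone_mull n (x : tens n) : tmul (tone F c n) x = x.
Proof.
rewrite (expand x) tmul_sumr; apply: eq_bigr => i _; rewrite tmulZr; congr tscale.
rewrite tone_pt btens_pt tmul_pt; apply: eq_pt => m b; exact: mulV1l.
Qed.

Lemma tone_mulr n (x : tens n) : tmul x (tone F c n) = x.
Proof.
rewrite (expand x) tmul_suml; apply: eq_bigr => i _; rewrite tmulZl; congr tscale.
rewrite tone_pt btens_pt tmul_pt; apply: eq_pt => m b; exact: mulV1r.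
Qed.

Lemma sym_tone n : Defs.is_sym (tone F c n).
Proof.
move=> s; apply/ffunP => k; rewrite !ffunE; congr ((nat_of_bool _)%:R); apply/eqP/eqP => H.
  apply/ffunP => m; have := congr1 (fun f : idx c n => f ((s^-1)%g m)) H.
  by rewrite !ffunE permKV.
by rewrite H; apply/ffunP => m; rewrite !ffunE.
Qed.

Definition o1 {n} : 'I_n.+2 := lift ord0 ord0.
Definition rs {n} (m : 'I_n) : 'I_n.+2 := lift ord0 (lift ord0 m).
Definition w2 n (m : 'I_2) : 'I_n.+2 := if m == ord0 then ord0 else o1.
Definition r2 n (k : idx c n.+2) : idx c 2 := [ffun m => k (w2 n m)].
Definition ext n (f : tens 2) (w : 'I_n -> I -> F) : tens n.+2 :=
  [ffun k => f (r2 k) * \prod_(m < n) w m (k (rs m))].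

Lemma prod_split n (g : 'I_n.+2 -> F) :
  \prod_m g m = g ord0 * (g o1 * \prod_(m < n) g (rs m)).
Proof. by rewrite !big_ord_recl. Qed.

Lemma I2_cases (m : 'I_2) : m = ord0 \/ m = o1.
Proof. by case: m => [[|[|//]] Hm]; [left|right]; apply/val_inj. Qed.

Lemma pt2E (u : 'I_2 -> I -> F) k : pt u k = u ord0 (k ord0) * u o1 (k o1).
Proof. by rewrite ffunE prod_split big_ord0 mulr1. Qed.

Lemma eq_ext n (f f' : tens 2) (w w' : 'I_n -> I -> F) :
  f = f' -> (forall m, w m =1 w' m) -> ext f w = ext f' w'.
Proof.
move=> -> h; apply/ffunP => k; rewrite !ffunE; congr (_ * _).
by apply: eq_bigr => m _; rewrite h.
Qed.

Lemma ext_pt n (u : 'I_n.+2 -> I -> F) :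
  pt u = ext (pt (fun m => u (w2 n m))) (fun m => u (rs m)).
Proof. by apply/ffunP => k; rewrite [LHS]ffunE prod_split ffunE pt2E !ffunE /w2 /= mulrA. Qed.

Definition cat2 n (u : 'I_2 -> I -> F) (w : 'I_n -> I -> F) : 'I_n.+2 -> I -> F :=
  fun m => match unlift ord0 m with
           | None => u ord0
           | Some m' => match unlift ord0 m' with None => u o1 | Some m'' => w m'' end
           end.

Lemma ext_cat n u (w : 'I_n -> I -> F) : ext (pt u) w = pt (cat2 u w).
Proof.
rewrite (ext_pt (cat2 u w)); apply: eq_ext => [|m b]; last by rewrite /cat2 /rs !liftK.
apply: eq_pt => m b; case: (I2_cases m) => ->; rewrite /cat2 /w2 /=.
  by rewrite unlift_none.
by rewrite liftK unlift_none.
Qed.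

Lemma extD n (f g : tens 2) (w : 'I_n -> I -> F) : ext (f + g) w = ext f w + ext g w.
Proof. by apply/ffunP => k; rewrite !ffunE mulrDl. Qed.
Lemma ext0 n (w : 'I_n -> I -> F) : ext 0 w = 0.
Proof. by apply/ffunP => k; rewrite !ffunE mul0r. Qed.
Lemma extZ n t (f : tens 2) (w : 'I_n -> I -> F) : ext (tscale t f) w = tscale t (ext f w).
Proof. by apply/ffunP => k; rewrite !ffunE mulrA. Qed.
Lemma ext_sum n (w : 'I_n -> I -> F) (J : Type) (r : seq J) (P : pred J) (f : J -> tens 2) :
  ext (\sum_(j <- r | P j) f j) w = \sum_(j <- r | P j) ext (f j) w.
Proof. exact: (big_morph (fun f => ext f w) (fun a b => @extD n a b w) (ext0 w)). Qed.

Lemma tmul_ext n (f g : tens 2) (w v : 'I_n -> I -> F) :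
  tmul (ext f w) (ext g v) = ext (tmul f g) (fun m => mulV (w m) (v m)).
Proof.
rewrite (expand f) (expand g) !ext_sum tmul_suml [in RHS]tmul_suml [in RHS]ext_sum.
apply: eq_bigr => i _; rewrite extZ tmulZl [in RHS]tmulZl extZ; congr tscale.
rewrite tmul_sumr [in RHS]tmul_sumr ext_sum; apply: eq_bigr => j _.
rewrite extZ tmulZr [in RHS]tmulZr extZ; congr tscale.
rewrite !btens_pt !ext_cat !tmul_pt ext_cat; apply: eq_pt => m b.
rewrite /cat2; case: (unlift ord0 m) => [m'|] //; case: (unlift ord0 m') => [m''|] //.
Qed.

End Tens.

Section Claim1.
Variables (F : fieldType) (c : cd_alg).
Hypothesis h2 : (2%:R : F) != 0.
Local Notation I := 'I_(cd_dim c).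
Local Notation tens := (tens F c).

Definition tau n : 'S_n.+2 := tperm ord0 o1.
Definition sflip n (i : idx c n.+2) : idx c n.+2 := [ffun m => i (tau n m)].

Lemma sflip_inv n (i : idx c n.+2) : sflip (sflip i) = i.
Proof. by apply/ffunP => m; rewrite !ffunE tpermK. Qed.

Lemma sym_expand n (x : tens n.+2) : tperm_act (tau n) x = x ->
  x = \sum_i tscale (x i / 2%:R) (btens F i + btens F (sflip i)).
Proof.
move=> Hx.
have E1 : \sum_i tscale (x i) (btens F (sflip i)) = x.
  transitivity (\sum_i tscale (x i) (btens F i)); last by rewrite -expand.
  rewrite (reindex_inj (can_inj (@sflip_inv n))); apply: eq_bigr => i _.
  by rewrite sflip_inv; congr tscale; rewrite -[in RHS]Hx ffunE.
have E0 : \sum_i tscale (x i / 2%:R) (btens F i + btens F (sflip i)) =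
   tscale (2%:R^-1) (\sum_i tscale (x i) (btens F i) + \sum_i tscale (x i) (btens F (sflip i))).
  rewrite tscaleD !tscale_sum -big_split; apply: eq_bigr => i _.
  by rewrite tscaleD !tscaleA ![2%:R^-1 * _]mulrC.
rewrite E0 E1 -expand; apply/ffunP => k; rewrite !ffunE.
by rewrite -mulr2n -[x k *+ 2]mulr_natr mulrCA mulVf // mulr1.
Qed.

Lemma o1_neq0 n : (o1 == ord0 :> 'I_n.+2) = false.
Proof. by apply/negbTE; rewrite eq_sym; exact: neq_lift. Qed.

Lemma w2_tau n (m : 'I_2) : tau n (w2 n m) = w2 n (tau 0 m).
Proof.
case: (I2_cases m) => ->; rewrite /tau /w2 ?eqxx ?o1_neq0.
  by rewrite !tpermL o1_neq0.
by rewrite !tpermR eqxx.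
Qed.

Lemma tau_rs n (m : 'I_n) : tau n (rs m) = rs m.
Proof.
by rewrite /tau tpermD // ?neq_lift // /o1 /rs (inj_eq lift_inj) neq_lift.
Qed.

Definition S2 (j : idx c 2) : tens 2 := btens F j + btens F (sflip j).

Lemma s_ext n (i : idx c n.+2) :
  btens F i + btens F (sflip i) = ext (S2 (r2 i)) (fun m => ev F (i (rs m))).
Proof.
rewrite /S2 extD; congr (_ + _).
  rewrite btens_pt ext_pt btens_pt; apply: eq_ext => [|m b //].
  by apply: eq_pt => m b; rewrite ffunE.
rewrite btens_pt ext_pt btens_pt; apply: eq_ext => [|m b].
  by apply: eq_pt => m b; rewrite !ffunE w2_tau.
by rewrite ffunE tau_rs.
Qed.

Lemma delta_ext n : delta1 F c n.+2 = ext (delta1 F c 2) (fun _ => ev F ord0).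
Proof.
rewrite /delta1 extZ ext_sum; congr tscale; apply: eq_bigr => a _.
rewrite btens_pt ext_pt btens_pt; apply: eq_ext => [|m b].
  apply: eq_pt => m b; rewrite !ffunE; case: (I2_cases m) => -> //.
by rewrite !ffunE.
Qed.

Lemma ffunDE n (f g : tens n) k : (f + g) k = f k + g k.
Proof. by rewrite ffunE. Qed.

Lemma D2_pt : delta1 F c 2 =
  tscale (cd_dim c)%:R^-1 (\sum_(a < cd_dim c) pt (fun _ : 'I_2 => ev F a)).
Proof.
rewrite /delta1; congr tscale; apply: eq_bigr => a _; rewrite btens_pt.
by apply: eq_pt => m b; rewrite ffunE ltn_ord.
Qed.

Lemma S2_pt (j : idx c 2) :
  btens F j + btens F (sflip j) = pt (fun m => ev F (j m)) + pt (fun m => ev F (j (tau 0 m))).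
Proof. by rewrite !btens_pt; congr (_ + _); apply: eq_pt => m b; rewrite ffunE. Qed.

Lemma sum_evev (k0 k1 : I) : \sum_a ev F a k0 * ev F a k1 = (k0 == k1)%:R.
Proof.
rewrite (bigD1 k0) //= big1 => [|a Ha]; first by rewrite /ev eqxx mul1r addr0 eq_sym.
by rewrite /ev eq_sym (negbTE Ha) mul0r.
Qed.

Lemma boolM2 (a b : bool) : ((a && b)%:R *+ 2 : F) = (a%:R *+ 2) * b%:R.
Proof. by case: a; case: b; rewrite /= ?mulr1 ?mulr0 ?mul0rn ?mul0r. Qed.

Lemma tau0E : tau 0 ord0 = o1 /\ tau 0 o1 = ord0.
Proof. by rewrite /tau tpermL tpermR. Qed.

Lemma P1a (j : idx c 2) :
  tmul (delta1 F c 2) (btens F j + btens F (sflip j)) =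
  tscale ((j ord0 == j o1)%:R *+ 2) (delta1 F c 2).
Proof.
have [t0 t1] := tau0E.
rewrite D2_pt S2_pt tmulZl tmul_suml tscaleA.
apply/ffunP => k; rewrite !ffunE !sum_ffunE.
under eq_bigr => a _ do rewrite tmulDr !tmul_pt ffunDE !pt2E !mulV_ev t0 t1.
under [in RHS]eq_bigr => a _ do rewrite pt2E.
rewrite K1 sum_evev boolM2; ring.
Qed.

Lemma P1b (j : idx c 2) :
  tmul (btens F j + btens F (sflip j)) (delta1 F c 2) =
  tscale ((j ord0 == j o1)%:R *+ 2) (delta1 F c 2).
Proof.
have [t0 t1] := tau0E.
rewrite D2_pt S2_pt tmulZr tmul_sumr tscaleA.
apply/ffunP => k; rewrite !ffunE !sum_ffunE.
under eq_bigr => a _ do rewrite tmulDl !tmul_pt ffunDE !pt2E !mulV_ev t0 t1.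
under [in RHS]eq_bigr => a _ do rewrite pt2E.
rewrite K2 sum_evev boolM2; ring.
Qed.

Definition phi (w : tens 2) := \sum_i w i * (i ord0 == i o1)%:R.

Lemma half2 (x : F) (b : bool) : x / 2%:R * (b%:R *+ 2) = x * b%:R.
Proof. by case: b; rewrite /= ?mulr1n ?mulr0n ?mul0rn ?mulr0 ?mulr1 ?divfK. Qed.

Lemma P2a (w : tens 2) : tperm_act (tau 0) w = w ->
  tmul (delta1 F c 2) w = tscale (phi w) (delta1 F c 2).
Proof.
move=> Hw; rewrite {1}(sym_expand Hw) tmul_sumr.
under eq_bigr => i _ do rewrite tmulZr P1a tscaleA half2.
by rewrite tscale_suml.
Qed.

Lemma P2b (w : tens 2) : tperm_act (tau 0) w = w ->
  tmul w (delta1 F c 2) = tscale (phi w) (delta1 F c 2).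
Proof.
move=> Hw; rewrite {1}(sym_expand Hw) tmul_suml.
under eq_bigr => i _ do rewrite tmulZl P1b tscaleA half2.
by rewrite tscale_suml.
Qed.

Lemma phiD (x y : tens 2) : phi (x + y) = phi x + phi y.
Proof. by rewrite /phi -big_split; apply: eq_bigr => i _; rewrite ffunE mulrDl. Qed.

Lemma phi_pt (u : 'I_2 -> I -> F) : phi (pt u) = \sum_a u ord0 a * u o1 a.
Proof.
rewrite /phi.
transitivity (\sum_(k : idx c 2) \sum_a \prod_m (u m (k m) * ev F a (k m))).
  apply: eq_bigr => k _; rewrite ffunE -sum_evev mulr_sumr; apply: eq_bigr => a _.
  by rewrite big_split /=; congr (_ * _); rewrite prod_split big_ord0 mulr1.
rewrite exchange_big; apply: eq_bigr => a _.
transitivity (\prod_(m < 2) \sum_b (u m b * ev F a b)).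
  by rewrite bigA_distr_bigA.
by rewrite prod_split big_ord0 mulr1 !sum_ev_r.
Qed.

Lemma sum_mulV_ev (p q r t : I) :
  \sum_a mulV (ev F p) (ev F q) a * mulV (ev F r) (ev F t) a = \sum_a sc F p q a * sc F r t a.
Proof. by apply: eq_bigr => a _; rewrite !mulV_ev. Qed.

Lemma P4 (i j : idx c 2) :
  phi (tmul (btens F i + btens F (sflip i)) (btens F j + btens F (sflip j))) =
  ((i ord0 == i o1) && (j ord0 == j o1))%:R *+ 4.
Proof.
have [t0 t1] := tau0E.
rewrite !S2_pt tmulDl !tmulDr !tmul_pt !phiD !phi_pt t0 t1 !sum_mulV_ev.
by rewrite -!big_split K3.
Qed.


Lemma tscale0l n (x : tens n) : tscale 0 x = 0.
Proof. by apply/ffunP => k; rewrite !ffunE mul0r. Qed.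

Definition bilin n (L : tens n -> tens n -> tens n) :=
  [/\ (forall x y z, L (x + y) z = L x z + L y z),
      (forall x y z, L x (y + z) = L x y + L x z),
      (forall t x y, L (tscale t x) y = tscale t (L x y)) &
      (forall t x y, L x (tscale t y) = tscale t (L x y))].

Lemma bilin_sum n (L : tens n -> tens n -> tens n) (J : finType) (a b : J -> F) (u v : J -> tens n) :
  bilin L -> L (\sum_i tscale (a i) (u i)) (\sum_j tscale (b j) (v j)) =
    \sum_i \sum_j tscale (a i * b j) (L (u i) (v j)).
Proof.
case=> HDl HDr HZl HZr.
have H0l y : L 0 y = 0.
  by rewrite -{1}(@tscale0 F c n 0) HZl tscale0l.
have H0r y : L y 0 = 0.
  by rewrite -{1}(@tscale0 F c n 0) HZr tscale0l.
rewrite (big_morph (L^~ _) (fun x y => HDl x y _) (H0l _)); apply: eq_bigr => i _.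
rewrite HZl (big_morph (L _) (fun x y => HDr _ x y) (H0r _)) tscale_sum.
by apply: eq_bigr => j _; rewrite HZr tscaleA.
Qed.

Lemma reduce n (L R : tens n.+2 -> tens n.+2 -> tens n.+2) x y :
  bilin L -> bilin R ->
  (forall i j : idx c n.+2, L (btens F i + btens F (sflip i)) (btens F j + btens F (sflip j)) =
                            R (btens F i + btens F (sflip i)) (btens F j + btens F (sflip j))) ->
  tperm_act (tau n) x = x -> tperm_act (tau n) y = y -> L x y = R x y.
Proof.
move=> bL bR H Hx Hy; rewrite (sym_expand Hx) (sym_expand Hy) !bilin_sum //.
by apply: eq_bigr => i _; apply: eq_bigr => j _; rewrite H.
Qed.

Lemma tpa_btens_flip n (i : idx c n.+2) : tperm_act (tau n) (btens F i) = btens F (sflip i).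
Proof.
apply/ffunP => k; rewrite !ffunE; congr ((nat_of_bool _)%:R); apply/eqP/eqP => H.
  by rewrite -H; apply/ffunP => m; rewrite !ffunE tpermK.
by rewrite H; apply/ffunP => m; rewrite !ffunE tpermK.
Qed.

Lemma sym_S n (i : idx c n.+2) :
  tperm_act (tau n) (btens F i + btens F (sflip i)) = btens F i + btens F (sflip i).
Proof. by rewrite tpaD !tpa_btens_flip sflip_inv addrC. Qed.

Lemma boolM4 (a b : bool) : ((a && b)%:R *+ 4 : F) = (a%:R *+ 2) * (b%:R *+ 2).
Proof. by case: a; case: b => /=; ring. Qed.

Lemma eq_mulV (u u' v v' : I -> F) : u =1 u' -> v =1 v' -> mulV u v =1 mulV u' v'.
Proof.
move=> hu hv k; rewrite /mulV; apply: eq_bigr => a _; apply: eq_bigr => b _.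
by rewrite hu hv.
Qed.

Section Level2.
Variables (p q : idx c 2).
Local Notation D := (delta1 F c 2).
Local Notation X := (btens F p + btens F (sflip p)).
Local Notation Y := (btens F q + btens F (sflip q)).

Lemma symXY : tperm_act (tau 0) (tmul X Y) = tmul X Y.
Proof. by rewrite tpa_tmul !sym_S. Qed.

Lemma L2C : tmul D X = tmul X D.
Proof. by rewrite P1a P1b. Qed.

Lemma L2A1 : tmul (tmul D X) Y = tmul D (tmul X Y).
Proof. by rewrite P1a tmulZl P1a tscaleA (P2a symXY) P4 boolM4. Qed.

Lemma L2A2 : tmul (tmul X D) Y = tmul X (tmul D Y).
Proof. by rewrite P1b tmulZl P1a tmulZr P1b !tscaleA; congr (tscale _ _); ring. Qed.

Lemma L2A3 : tmul (tmul X Y) D = tmul X (tmul Y D).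
Proof. by rewrite (P2b symXY) P4 P1b tmulZr P1b tscaleA boolM4 mulrC. Qed.
End Level2.

Definition lin n (L : tens n -> tens n) :=
  (forall x y, L (x + y) = L x + L y) /\ (forall t x, L (tscale t x) = tscale t (L x)).

Lemma reduce1 n (L R : tens n.+2 -> tens n.+2) x :
  lin L -> lin R ->
  (forall i : idx c n.+2, L (btens F i + btens F (sflip i)) = R (btens F i + btens F (sflip i))) ->
  tperm_act (tau n) x = x -> L x = R x.
Proof.
move=> [LD LZ] [RD RZ] H Hx.
have L0 : L 0 = 0 by rewrite -{1}(@tscale0 F c n.+2 0) LZ tscale0l.
have R0 : R 0 = 0 by rewrite -{1}(@tscale0 F c n.+2 0) RZ tscale0l.
rewrite (sym_expand Hx) (big_morph L LD L0) (big_morph R RD R0).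
by apply: eq_bigr => i _; rewrite LZ RZ H.
Qed.

Local Notation s_ i := (btens F i + btens F (sflip i)).

Lemma BC n (i : idx c n.+2) : tmul (delta1 F c n.+2) (s_ i) = tmul (s_ i) (delta1 F c n.+2).
Proof.
rewrite delta_ext s_ext !tmul_ext; apply: eq_ext => [|m b]; first exact: L2C.
by rewrite mulV1l mulV1r.
Qed.

Lemma BA1 n (i j : idx c n.+2) :
  tmul (tmul (delta1 F c n.+2) (s_ i)) (s_ j) = tmul (delta1 F c n.+2) (tmul (s_ i) (s_ j)).
Proof.
rewrite delta_ext !s_ext !tmul_ext; apply: eq_ext => [|m b]; first exact: L2A1.
by rewrite mulV1l; apply: eq_mulV => // k; rewrite mulV1l.
Qed.

Lemma BA2 n (i j : idx c n.+2) :
  tmul (tmul (s_ i) (delta1 F c n.+2)) (s_ j) = tmul (s_ i) (tmul (delta1 F c n.+2) (s_ j)).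
Proof.
rewrite delta_ext !s_ext !tmul_ext; apply: eq_ext => [|m b]; first exact: L2A2.
transitivity (mulV (ev F (i (rs m))) (ev F (j (rs m))) b).
  by apply: eq_mulV => // k; rewrite mulV1r.
by apply: eq_mulV => // k; rewrite mulV1l.
Qed.

Lemma BA3 n (i j : idx c n.+2) :
  tmul (tmul (s_ i) (s_ j)) (delta1 F c n.+2) = tmul (s_ i) (tmul (s_ j) (delta1 F c n.+2)).
Proof.
rewrite delta_ext !s_ext !tmul_ext; apply: eq_ext => [|m b]; first exact: L2A3.
by rewrite mulV1r; apply: eq_mulV => // k; rewrite mulV1r.
Qed.

Lemma claim1 n (x : tens n.+2) :
  Defs.is_sym x -> comm_assoc_with (@Defs.is_sym F c n.+2) (delta1 F c n.+2) x.
Proof.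
move=> Hx; have Hxt := Hx (tau n).
split.
  apply: (@reduce1 n (fun x => tmul (delta1 F c n.+2) x) (fun x => tmul x (delta1 F c n.+2)) x) => //.
  - by split=> *; rewrite ?(tmulDl, tmulDr, tmulZl, tmulZr).
  - by split=> *; rewrite ?(tmulDl, tmulDr, tmulZl, tmulZr).
  - exact: BC.
move=> y Hy; have Hyt := Hy (tau n); split.
- apply: (@reduce n (fun x y => tmul (tmul (delta1 F c n.+2) x) y)
                   (fun x y => tmul (delta1 F c n.+2) (tmul x y)) x y) => //.
  + by split=> *; rewrite ?(tmulDl, tmulDr, tmulZl, tmulZr).
  + by split=> *; rewrite ?(tmulDl, tmulDr, tmulZl, tmulZr).
  + exact: BA1.
- apply: (@reduce n (fun x y => tmul (tmul x (delta1 F c n.+2)) y)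
                   (fun x y => tmul x (tmul (delta1 F c n.+2) y)) x y) => //.
  + by split=> *; rewrite ?(tmulDl, tmulDr, tmulZl, tmulZr).
  + by split=> *; rewrite ?(tmulDl, tmulDr, tmulZl, tmulZr).
  + exact: BA2.
- apply: (@reduce n (fun x y => tmul (tmul x y) (delta1 F c n.+2))
                   (fun x y => tmul x (tmul y (delta1 F c n.+2))) x y) => //.
  + by split=> *; rewrite ?(tmulDl, tmulDr, tmulZl, tmulZr).
  + by split=> *; rewrite ?(tmulDl, tmulDr, tmulZl, tmulZr).
  + exact: BA3.
Qed.
End Claim1.

Section Abstract.
Variables (F : fieldType) (c : cd_alg) (n : nat).
Local Notation tens := (tens F c n).
Local Notation sym := (@Defs.is_sym F c n).

Definition central (z : tens) := forall x, sym x -> comm_assoc_with sym z x.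

Lemma sym_tmul x y : sym x -> sym y -> sym (tmul x y).
Proof. by move=> hx hy s; rewrite tpa_tmul hx hy. Qed.
Lemma sym_add x y : sym x -> sym y -> sym (x + y).
Proof. by move=> hx hy s; rewrite tpaD hx hy. Qed.
Lemma sym_scale t x : sym x -> sym (tscale t x).
Proof. by move=> hx s; rewrite tpaZ hx. Qed.

Lemma central_add z w : central z -> central w -> central (z + w).
Proof.
move=> hz hw x hx; have [c1 a1] := hz x hx; have [c2 a2] := hw x hx.
split; first by rewrite tmulDl tmulDr c1 c2.
move=> y hy; have [e1 e2 e3] := a1 y hy; have [f1 f2 f3] := a2 y hy.
by split; rewrite !(tmulDl, tmulDr) ?e1 ?e2 ?e3 ?f1 ?f2 ?f3.
Qed.

Lemma central_scale t z : central z -> central (tscale t z).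
Proof.
move=> hz x hx; have [c1 a1] := hz x hx.
split; first by rewrite tmulZl tmulZr c1.
move=> y hy; have [e1 e2 e3] := a1 y hy.
by split; rewrite !(tmulZl, tmulZr) ?e1 ?e2 ?e3.
Qed.

Lemma central0 : central 0.
Proof.
move=> x hx; split; first by rewrite tmul0l tmul0r.
by move=> y hy; split; rewrite ?(tmul0l, tmul0r).
Qed.

Lemma central_sum (J : Type) (r : seq J) (P : pred J) (f : J -> tens) :
  (forall j, P j -> central (f j)) -> central (\sum_(j <- r | P j) f j).
Proof.
move=> h; apply: (big_ind central) => //; [exact: central0 | exact: central_add].
Qed.

Lemma central_tpa s z : central z -> central (tperm_act s z).
Proof.
move=> hz x hx; have [c1 a1] := hz x hx; have hxs := hx s.
split.
  by rewrite -[in LHS]hxs -tpa_tmul c1 tpa_tmul hxs.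
move=> y hy; have [e1 e2 e3] := a1 y hy; have hys := hy s.
split; rewrite -hxs -hys -!tpa_tmul.
- by rewrite e1.
- by rewrite e2.
- by rewrite e3.
Qed.

Lemma central_mul z w : sym z -> central z -> sym w -> central w -> central (tmul z w).
Proof.
move=> sz hz sw hw x hx.
split.
  transitivity (tmul z (tmul w x)).
    by case: ((hz w sw).2 x hx).
  rewrite (hw x hx).1.
  transitivity (tmul (tmul z x) w).
    by case: ((hz x hx).2 w sw).
  rewrite (hz x hx).1.
  by case: ((hz x hx).2 w sw).
move=> y hy.
have sxy := sym_tmul hx hy.
split.
- transitivity (tmul (tmul z (tmul w x)) y).
    by case: ((hz w sw).2 x hx) => ->.
  transitivity (tmul z (tmul (tmul w x) y)).
    by case: ((hz (tmul w x) (sym_tmul sw hx)).2 y hy).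
  transitivity (tmul z (tmul w (tmul x y))).
    by case: ((hw x hx).2 y hy) => ->.
  by case: ((hz w sw).2 (tmul x y) sxy).
- transitivity (tmul (tmul (tmul x z) w) y).
    by case: ((hz x hx).2 w sw) => _ ->.
  transitivity (tmul (tmul x z) (tmul w y)).
    by case: ((hw (tmul x z) (sym_tmul hx sz)).2 y hy).
  transitivity (tmul x (tmul z (tmul w y))).
    by case: ((hz x hx).2 (tmul w y) (sym_tmul sw hy)).
  by case: ((hz w sw).2 y hy) => ->.
- transitivity (tmul (tmul (tmul x y) z) w).
    by case: ((hz (tmul x y) sxy).2 w sw).
  transitivity (tmul (tmul x (tmul y z)) w).
    by case: ((hz x hx).2 y hy) => _ _ ->.
  transitivity (tmul x (tmul (tmul y z) w)).
    by case: ((hw x hx).2 (tmul y z) (sym_tmul hy sz)).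
  by case: ((hz y hy).2 w sw) => _ ->.
Qed.
End Abstract.

Section Final.
Variables (F : fieldType) (c : cd_alg).

Lemma central_tone N : central (tone F c N).
Proof.
move=> x hx; split; first by rewrite tone_mull tone_mulr.
by move=> y hy; split; rewrite ?(tone_mull, tone_mulr).
Qed.

Lemma sym_delta_n N : Defs.is_sym (delta_n F c N).
Proof.
move=> s; rewrite /delta_n /symmetrize tpaZ tpa_sum; congr tscale.
under eq_bigr => t _ do rewrite tpa_comp.
by rewrite [RHS](reindex_inj (mulIg s)).
Qed.

Lemma central_delta_n N : central (delta1 F c N) -> central (delta_n F c N).
Proof.
move=> h; rewrite /delta_n /symmetrize; apply: central_scale; apply: central_sum => s _.
exact: central_tpa.
Qed.

Lemma gen_ok N (z : tens F c N) : Defs.is_sym z -> central z ->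
  forall a, in_gen_alg z a -> Defs.is_sym a /\ central a.
Proof.
move=> sz cz a; elim => [| | a' b' _ [sa ca] _ [sb cb] | t a' _ [sa ca] | a' b' _ [sa ca] _ [sb cb]].
- by split; [exact: sym_tone | exact: central_tone].
- by split.
- by split; [exact: sym_add | exact: central_add].
- by split; [exact: sym_scale | exact: central_scale].
- by split; [exact: sym_tmul | exact: central_mul].
Qed.

Lemma claims_all (h2 : (2%:R : F) != 0) N : (2 <= N)%N -> lemma2p8_claims F c N.
Proof.
case: N => [|[|N]] // _.
have c1 := @claim1 F c h2 N.
split; first by move=> x; exact: c1.
have cd : central (delta_n F c N.+2) by apply: central_delta_n => x hx; exact: c1.
split; first by split; [exact: sym_delta_n | exact: cd].
move=> a b e ha hb he.
have [sa ca] := gen_ok (@sym_delta_n N.+2) cd ha.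
have [sb _] := gen_ok (@sym_delta_n N.+2) cd hb.
have [se _] := gen_ok (@sym_delta_n N.+2) cd he.
split; first by case: (ca b sb).
by case: (ca b sb) => _ /(_ e se) [].
Qed.
End Final.


Theorem lemma2p8 (R : realType) (c : cd_alg) (n : nat) :
  (2 <= n)%N ->
  lemma2p8_claims (R : fieldType) c n /\ lemma2p8_claims (R[i] : fieldType) c n.
Proof.
move=> hn; split; apply: claims_all => //; by rewrite Num.Theory.pnatr_eq0.
Qed.
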